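(* For all integers $k\ge 2$, $s\in\mathbb{N}$ and every $\delta>0$, there exist $\gamma=\gamma(k,s,\delta)>0$ and $n_0$ such that the following holds for all $n\ge n_0$. Let $G$ be a $k$-uniform hypergraph on $n$ vertices with $\min\{e(G),\binom{n}{k}-e(G)\}\ge\delta n^k$, and let $W\subseteq\binom{V(G)}{k}$ satisfy $|W|\le\gamma n^k$. Then $G$ contains, as an induced subhypergraph, a non-homogeneous $(k,k,s)$-pattern $F$ that avoids $W$, i.e. $\binom{V(F)}{k}\cap W=\emptyset$.
   Context: For $k,t,s\in\mathbb{N}$ with $k,t\ge 2$, a $(k,t,s)$-pattern is a $k$-uniform hypergraph $F$ admitting a partition $V(F)=V_1\cup\cdots\cup V_t$ into parts of size $s$ each, such that for every $S\in\binom{V(F)}{k}$, whether $S\in E(F)$ depends only on $(|S\cap V_1|,\ldots,|S\cap V_t|)$. $F$ is homogeneous if it is empty (no edges) or complete (all $k$-subsets are edges). *)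

(* Defs.v *)
From HB Require Import structures.
From mathcomp Require Import all_boot all_order all_algebra.
From mathcomp Require Import reals.
Set Implicit Arguments. Unset Strict Implicit. Unset Printing Implicit Defensive.

(* A k-uniform hypergraph on vertex set 'I_n is given by its edge set
   E : {set {set 'I_n}} with every edge of size k. *)

Definition k_uniform (n k : nat) (E : {set {set 'I_n}}) : Prop :=
  forall e, e \in E -> #|e| = k.

Definition ksubsets (n k : nat) (U : {set 'I_n}) : {set {set 'I_n}} :=
  [set S : {set 'I_n} | (S \subset U) && (#|S| == k)].

Definition parts_of_size (n t s : nat) (V : 'I_t -> {set 'I_n}) : Prop :=
  (forall i, #|V i| = s) /\ (forall i j, i != j -> [disjoint V i & V j]).

Definition parts_union (n t : nat) (V : 'I_t -> {set 'I_n}) : {set 'I_n} :=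
  \bigcup_(i < t) V i.

(* The induced subhypergraph G[U] of G = ('I_n, E), with U the union of the
   parts V, is a (k,t,s)-pattern with respect to the partition V: whether a
   k-subset of U is an edge depends only on its intersection profile
   (|S ∩ V_1|, ..., |S ∩ V_t|). *)
Definition induced_pattern (n k t s : nat) (E : {set {set 'I_n}})
    (V : 'I_t -> {set 'I_n}) : Prop :=
  parts_of_size s V /\
  forall S S', S \in ksubsets k (parts_union V) -> S' \in ksubsets k (parts_union V) ->
    (forall i, #|S :&: V i| = #|S' :&: V i|) -> (S \in E) = (S' \in E).

Definition homogeneous_on (n k : nat) (E : {set {set 'I_n}}) (U : {set 'I_n}) : Prop :=
  (forall S, S \in ksubsets k U -> S \notin E) \/
  (forall S, S \in ksubsets k U -> S \in E).

Definition avoids (n k : nat) (U : {set 'I_n}) (W : {set {set 'I_n}}) : Prop :=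
  forall S, S \in ksubsets k U -> S \notin W.

(* Main.v *)
Require Import Defs.
From HB Require Import structures.
From mathcomp Require Import all_boot all_order all_algebra.
From mathcomp Require Import reals.
From mathcomp Require Import zify.
From mathcomp.algebra_tactics Require Import ring lra.
Set Implicit Arguments. Unset Strict Implicit. Unset Printing Implicit Defensive.


Lemma cut_sub (T : finType) m : forall A : {set T}, m <= #|A| ->
  exists B : {set T}, B \subset A /\ #|B| = m.
Proof.
move=> A; move Hn: #|A| => n; elim: n A Hn => [|n IH] A Hn Hm.
  by exists set0; rewrite sub0set cards0; move: Hm; rewrite leqn0 => /eqP.
case: (ltngtP m n.+1) Hm => // [Hlt|->] _; last by exists A.
have: 0 < #|A| by rewrite Hn.
rewrite card_gt0 => /set0Pn [x xA].
have HA: #|A :\ x| = n by move: Hn; rewrite (cardsD1 x A) xA add1n => -[].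
have [B [BA HB]] := IH _ HA Hlt.
exists B; split => //; apply: (subset_trans BA); exact: subsetDl.
Qed.

Inductive shom (T C : finType) (chi : {set T} -> C) (j : nat) (col : T -> C)
  : {set T} -> Prop :=
| shom0 : shom chi j col set0
| shomS (v : T) (S : {set T}) : v \notin S -> shom chi j col S ->
    (forall R : {set T}, R \subset S -> #|R| = j -> chi (v |: R) = col v) ->
    shom chi j col (v |: S).

Lemma shom_col (T C : finType) (chi : {set T} -> C) j col col' S :
  shom chi j col S -> {in S, col' =1 col} -> shom chi j col' S.
Proof.
elim => [|v S1 vS _ IH Hc] Heq; first by constructor.
constructor => //.
  by apply: IH => x xS; apply: Heq; rewrite in_setU1 xS orbT.
by move=> R RS HR; rewrite Heq ?setU11 //; exact: Hc.
Qed.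

Lemma shom_hom (T C : finType) (chi : {set T} -> C) j col S :
  shom chi j col S -> forall (U : {set T}) c0, U \subset S -> {in U, forall x, col x = c0} ->
  forall A : {set T}, A \subset U -> #|A| = j.+1 -> chi A = c0.
Proof.
elim => [|v S1 vS _ IH Hc] U c0 US Hcol A AU HA.
  have: A \subset set0 by apply: (subset_trans AU).
  by rewrite subset0 => /eqP Ae; move: HA; rewrite Ae cards0.
case vA: (v \in A).
  rewrite -(setD1K vA) Hc.
  - by apply: Hcol; apply: (subsetP AU).
  - apply/subsetP => x; rewrite in_setD1 => /andP [xv xA].
    by move: (subsetP US x (subsetP AU x xA)); rewrite in_setU1 (negbTE xv).
  - by move: HA; rewrite (cardsD1 v A) vA add1n => -[].
apply: (IH (U :\ v) c0).
- apply/subsetP => x; rewrite in_setD1 => /andP [xv xU].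
  by move: (subsetP US x xU); rewrite in_setU1 (negbTE xv).
- by move=> x; rewrite in_setD1 => /andP [_ xU]; apply: Hcol.
- apply/subsetP => x xA; rewrite in_setD1 (subsetP AU x xA) andbT.
  by apply/eqP => exv; move: vA; rewrite -exv xA.
- exact: HA.
Qed.

Lemma pigeon (T C : finType) (col : T -> C) (S : {set T}) s :
  #|C| * s < #|S| -> exists c0, s < #|[set x in S | col x == c0]|.
Proof.
move=> H; apply/existsP; move: H; apply: contraLR; rewrite negb_exists => /forallP Hall.
rewrite -leqNgt -sum1_card (partition_big col predT) //=.
rewrite -[X in _ <= X * _]sum1_card big_distrl /=.
apply: leq_sum => c0 _; rewrite mul1n.
move: (Hall c0); rewrite -leqNgt; apply: leq_trans.
rewrite -sum1_card; apply: eq_leq; apply: eq_bigl => x; by rewrite inE.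
Qed.

Lemma ramsey j : forall c s, exists N, forall (T C : finType) (chi : {set T} -> C)
  (Y : {set T}), #|C| <= c -> N <= #|Y| ->
  exists S : {set T}, [/\ S \subset Y, #|S| = s &
    forall A B : {set T}, A \subset S -> B \subset S -> #|A| = j -> #|B| = j -> chi A = chi B].
Proof.
elim: j => [|j IHj] c s.
  exists s => T C chi Y _ HY; have [S [SY HS]] := cut_sub HY.
  by exists S; split => // A B _ _ /cards0_eq -> /cards0_eq ->.
have Claim : forall m, exists M, forall (T C : finType) (chi : {set T} -> C)
  (Y : {set T}), #|C| <= c -> M <= #|Y| ->
  exists (S : {set T}) (col : T -> C), [/\ S \subset Y, #|S| = m & shom chi j col S].
  elim=> [|m [M HM]].
    exists 0 => T C chi Y _ _; exists set0, (fun _ => chi set0).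
    by split; [exact: sub0set | exact: cards0 | constructor].
  have [N HN] := IHj c M; exists N.+1 => T C chi Y Hc HY.
  have: 0 < #|Y| by apply: leq_trans HY.
  rewrite card_gt0 => /set0Pn [v vY].
  have HY' : N <= #|Y :\ v| by move: HY; rewrite (cardsD1 v Y) vY add1n ltnS.
  have [S' [S'Y HS' Hhom]] := HN T C (fun R => chi (v |: R)) _ Hc HY'.
  have [S'' [col [S''S HS'' Hsh]]] := HM T C chi S' Hc (eq_leq (esym HS')).
  pose cv := chi (v |: odflt set0 [pick R : {set T} | (R \subset S') && (#|R| == j)]).
  pose col' := fun x => if x == v then cv else col x.
  have vS'' : v \notin S''.
    apply/negP => vS; move: (subsetP S'Y v (subsetP S''S v vS)).
    by rewrite in_setD1 eqxx.
  exists (v |: S''), col'; split.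
  - apply/subsetP => x; rewrite in_setU1 => /orP [/eqP -> //|xS].
    by move: (subsetP S'Y x (subsetP S''S x xS)); rewrite in_setD1 => /andP [].
  - by rewrite cardsU1 vS'' HS''.
  - constructor => //.
      apply: (@shom_col _ _ chi j col col' S'' Hsh) => x xS; rewrite /col'.
      by case: eqP => // exv; move: vS''; rewrite -exv xS.
    move=> R RS HR; rewrite /col' eqxx /cv.
    case: pickP => [R0 /andP [R0S /eqP HR0]|H0] /=.
      by apply: Hhom => //; apply: subset_trans RS S''S.
    by move: (H0 R); rewrite (subset_trans RS S''S) HR eqxx.
have [M HM] := Claim (c * s).+1.
exists M => T C chi Y Hc HY.
have [S [col [SY HS Hsh]]] := HM T C chi Y Hc HY.
have [c0 Hc0] : exists c0, s < #|[set x in S | col x == c0]|.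
  by apply: pigeon; rewrite HS ltnS leq_mul2r Hc orbT.
have [S0 [S0U HS0]] := cut_sub (ltnW Hc0).
exists S0; split => //.
  by apply: subset_trans S0U _; apply: subset_trans SY; apply/subsetP => x; rewrite inE => /andP [].
move=> A B AS BS HA HB.
have U_S : [set x in S | col x == c0] \subset S by apply/subsetP => x; rewrite inE => /andP [].
have Hcol : {in [set x in S | col x == c0], forall x, col x = c0}.
  by move=> x; rewrite inE => /andP [_ /eqP].
rewrite (shom_hom Hsh U_S Hcol (subset_trans AS S0U) HA).
by rewrite (shom_hom Hsh U_S Hcol (subset_trans BS S0U) HB).
Qed.


Lemma ramsey_upto K : forall c s, exists N, forall (T C : finType) (chi : {set T} -> C)
  (Y : {set T}), #|C| <= c -> N <= #|Y| ->
  exists S : {set T}, [/\ S \subset Y, #|S| = s &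
    forall A B : {set T}, A \subset S -> B \subset S -> #|A| = #|B| -> #|A| <= K ->
      chi A = chi B].
Proof.
elim: K => [|K IH] c s.
  exists s => T C chi Y _ HY; have [S [SY HS]] := cut_sub HY.
  exists S; split => // A B _ _ HAB; rewrite leqn0 => /eqP HA.
  by move: HAB; rewrite HA => /esym HB; rewrite (cards0_eq HA) (cards0_eq HB).
have [N1 HN1] := ramsey K.+1 c s.
have [N HN] := IH c N1.
exists N => T C chi Y Hc HY.
have [S1 [S1Y HS1 Hh1]] := HN T C chi Y Hc HY.
have [S [SS1 HS Hh]] := HN1 T C chi S1 Hc (eq_leq (esym HS1)).
exists S; split => //; first exact: subset_trans SS1 S1Y.
move=> A B AS BS HAB; rewrite leq_eqVlt ltnS => /orP [/eqP HA|HA].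
  by apply: Hh => //; rewrite -HAB.
by apply: Hh1 => //; apply: subset_trans SS1.
Qed.

Lemma bigcup_seqP (T : finType) (l : seq {set T}) x :
  x \in \bigcup_(B <- l) B <-> exists2 i, i < size l & x \in nth set0 l i.
Proof.
elim: l => [|B l IH]; rewrite ?big_nil ?big_cons ?inE.
  by split => // [[i]].
split.
  by case/orP => [xB|/IH [i Hi xi]]; [exists 0 | exists i.+1].
by case=> [[|i]] Hi xi; [rewrite xi | apply/orP; right; apply/IH; exists i].
Qed.

Lemma card_bigcup_seq (T : finType) (l : seq {set T}) m :
  (forall i, i < size l -> #|nth set0 l i| <= m) ->
  #|\bigcup_(B <- l) B| <= size l * m.
Proof.
elim: l => [|B l IH] H; first by rewrite big_nil cards0.
rewrite big_cons /= mulSn; apply: leq_trans (leq_card_setU _ _) _.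
apply: leq_add; first exact: (H 0).
by apply: IH => i Hi; apply: (H i.+1).
Qed.

Definition pcons (T C : finType) (chi : {set T} -> C) K (Bs : seq {set T}) :=
  forall S S' : {set T}, S \subset \bigcup_(B <- Bs) B ->
    S' \subset \bigcup_(B <- Bs) B -> #|S| <= K ->
   (forall i, i < size Bs -> #|S :&: nth set0 Bs i| = #|S' :&: nth set0 Bs i|) ->
   chi S = chi S'.

Definition disj (T : finType) (rows : seq {set T}) :=
  forall i j, i < size rows -> j < size rows -> i != j ->
    [disjoint nth set0 rows i & nth set0 rows j].

Definition cutset (T : finType) (A : {set T}) m :=
  odflt A [pick B : {set T} | (B \subset A) && (#|B| == m)].

Lemma cutsetP (T : finType) (A : {set T}) m : m <= #|A| ->
  cutset A m \subset A /\ #|cutset A m| = m.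
Proof.
move=> Hm; rewrite /cutset; case: pickP => [B /andP [BA /eqP HB] //|H0] /=.
have [B [BA HB]] := cut_sub Hm.
by move: (H0 B); rewrite BA HB eqxx.
Qed.

Lemma setDI_disj (T : finType) (S B0 B : {set T}) :
  [disjoint B0 & B] -> (S :\: B0) :&: B = S :&: B.
Proof.
move=> D; apply/setP => x; rewrite !inE.
case xB: (x \in B); rewrite ?andbF ?andbT //.
by rewrite (disjointFl D xB).
Qed.

Lemma card_disj_cover (T : finType) (l : seq {set T}) (Z : {set T}) :
  disj l -> Z \subset \bigcup_(B <- l) B ->
  #|Z| = \sum_(i < size l) #|Z :&: nth set0 l i|.
Proof.
elim: l Z => [|B l IH] Z D.
  by rewrite big_nil subset0 => /eqP ->; rewrite cards0 big_ord0.
rewrite big_cons => ZU; rewrite big_ord_recl /=.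
have Dl : disj l by move=> i j Hi Hj Hij; apply: (D i.+1 j.+1).
rewrite -(cardsID B Z); congr (_ + _).
rewrite (IH (Z :\: B) Dl).
  apply: eq_bigr => i _; rewrite setDI_disj //.
  by apply: (D 0 i.+1) => //=; rewrite ltnS ltn_ord.
apply/subsetP => x; rewrite inE => /andP [xB xZ].
by move: (subsetP ZU x xZ); rewrite in_setU (negbTE xB).
Qed.

Lemma prod_ramsey r : forall K c s, exists L, forall (T C : finType)
  (chi : {set T} -> C) (rows : seq {set T}),
  size rows = r -> #|C| <= c -> (forall i, i < r -> L <= #|nth set0 rows i|) ->
  disj rows ->
  exists Bs : seq {set T}, [/\ size Bs = r,
    (forall i, i < r -> nth set0 Bs i \subset nth set0 rows i /\ #|nth set0 Bs i| = s)
    & pcons chi K Bs].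
Proof.
elim: r => [|r IH] K c s.
  exists 0 => T C chi [|//] _ _ _ _; exists [::]; split => //.
  move=> S S'; rewrite big_nil !subset0 => /eqP -> /eqP -> //.
have [L1 HL1] := IH K (c ^ K.+1) s.
have [N HN] := ramsey_upto K (c.+1 ^ (2 ^ (r * L1))) s.
exists (maxn L1 N) => T C chi [//|R rows'] /= [Hsz] Hc Hrows Hdisj.
pose rows'' := map (fun A : {set T} => cutset A L1) rows'.
have Hnth'' : forall i, i < r -> nth set0 rows'' i \subset nth set0 rows' i /\
    #|nth set0 rows'' i| = L1.
  move=> i Hi; rewrite /rows'' (nth_map set0) ?Hsz //; apply: cutsetP.
  by apply: leq_trans (leq_maxl _ N) (Hrows i.+1 Hi).
pose U := \bigcup_(B <- rows'') B.
have HU : #|U| <= r * L1.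
  rewrite -Hsz -(size_map (fun A : {set T} => cutset A L1)); apply: card_bigcup_seq => i Hi.
  by rewrite (Hnth'' i _).2 // -Hsz -(size_map (fun A : {set T} => cutset A L1)).
pose chih := fun X : {set T} =>
  [ffun Rr : {X0 : {set T} | X0 \subset U} => chi (X :|: val Rr)].
have Hch : #|{ffun {X0 : {set T} | X0 \subset U} -> C}| <= c.+1 ^ (2 ^ (r * L1)).
  rewrite card_ffun card_sig.
  have -> : #|[pred X0 : {set T} | X0 \subset U]| = 2 ^ #|U|.
    by rewrite -card_powerset; apply: eq_card => X0; rewrite powersetE.
  apply: leq_trans (_ : c.+1 ^ 2 ^ #|U| <= _).
    by rewrite leq_exp2r ?expn_gt0 // ltnW // ltnS.
  by rewrite leq_pexp2l // leq_pexp2l.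
have [B0 [B0R HB0 Hh0]] := HN T _ chih R Hch (leq_trans (leq_maxr _ _) (Hrows 0 isT)).
pose Xj := fun j : nat => cutset B0 j.
pose chi' := fun Rest : {set T} => [ffun j : 'I_K.+1 => chi (Xj j :|: Rest)].
have Hc' : #|{ffun 'I_K.+1 -> C}| <= c ^ K.+1 by rewrite card_ffun card_ord leq_exp2r.
have Hsz'' : size rows'' = r by rewrite size_map.
have Hdisj'' : disj rows''.
  move=> i j; rewrite Hsz'' => Hi Hj Hij.
  apply: disjointWl (Hnth'' i Hi).1 _; apply: disjointWr (Hnth'' j Hj).1 _.
  by apply: (Hdisj i.+1 j.+1) => //=; rewrite Hsz.
have [Bs' [HBs' Hsub' Hpc']] := HL1 T _ chi' rows'' Hsz'' Hc'
  (fun i Hi => eq_leq (esym (Hnth'' i Hi).2)) Hdisj''.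
have Dj : forall i, i < size Bs' -> [disjoint B0 & nth set0 Bs' i].
  move=> i; rewrite HBs' => Hi.
  apply: disjointWl B0R _; apply: disjointWr (subset_trans (Hsub' i Hi).1 (Hnth'' i Hi).1) _.
  by apply: (Hdisj 0 i.+1) => //=; rewrite Hsz.
have BsU : \bigcup_(B <- Bs') B \subset U.
  apply/subsetP => x /bigcup_seqP [i Hi xi]; apply/bigcup_seqP; exists i.
    by rewrite Hsz'' -HBs'.
  by apply: (subsetP (Hsub' i _).1) => //; rewrite -HBs'.
exists (B0 :: Bs'); split => /=; first by rewrite HBs'.
  move=> [|i] Hi //=; have [H1 H2] := Hsub' i Hi.
  by split => //; apply: subset_trans H1 (Hnth'' i Hi).1.
have Key : forall S : {set T}, S \subset B0 :|: \bigcup_(B <- Bs') B -> #|S| <= K ->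
    chi S = chi' (S :\: B0) (inord #|S :&: B0|).
  move=> S SU HK.
  have Hj : #|S :&: B0| <= K by apply: leq_trans (subset_leq_card (subsetIl _ _)) HK.
  have SD : S :\: B0 \subset U.
    apply: subset_trans BsU; apply/subsetP => x; rewrite inE => /andP [xB0 xS].
    by move: (subsetP SU x xS); rewrite in_setU (negbTE xB0).
  rewrite /chi' ffunE inordK ?ltnS //.
  have -> : chi S = chih (S :&: B0) (Sub (S :\: B0) SD) by rewrite ffunE /= setID.
  have [XB HX] : Xj #|S :&: B0| \subset B0 /\ #|Xj #|S :&: B0| | = #|S :&: B0|.
    by apply: cutsetP; apply: subset_leq_card; apply: subsetIr.
  by rewrite (Hh0 (S :&: B0) (Xj #|S :&: B0|)) ?subsetIr ?HX // ffunE.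
move=> S S'; rewrite big_cons => SU S'U HK Hprof.
have H0 := Hprof 0 isT; rewrite /= in H0.
have HK' : #|S'| <= K.
  have Dall : disj (B0 :: Bs').
    move=> [|i] [|j] //= Hi Hj Hij.
    - exact: Dj.
    - by rewrite disjoint_sym; apply: Dj.
    apply: disjointWl (Hsub' i _).1 _; first by rewrite -HBs'.
    apply: disjointWr (Hsub' j _).1 _; first by rewrite -HBs'.
    by apply: Hdisj'' => //; rewrite Hsz'' -HBs'.
  have E1 : forall Z : {set T}, Z \subset B0 :|: \bigcup_(B <- Bs') B ->
      #|Z| = \sum_(i < size (B0 :: Bs')) #|Z :&: nth set0 (B0 :: Bs') i|.
    by move=> Z ZU; apply: card_disj_cover => //; rewrite big_cons.
  rewrite (E1 S' S'U).
  have -> : \sum_(i < size (B0 :: Bs')) #|S' :&: nth set0 (B0 :: Bs') i| =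
            \sum_(i < size (B0 :: Bs')) #|S :&: nth set0 (B0 :: Bs') i|.
    by apply: eq_bigr => i _; rewrite (Hprof i) //= ltn_ord.
  by rewrite -E1.
rewrite (Key S SU HK) (Key S' S'U HK') H0; congr (_ _ _).
apply: Hpc'.
- apply/subsetP => x; rewrite inE => /andP [xB0 xS].
  by move: (subsetP SU x xS); rewrite in_setU (negbTE xB0).
- apply/subsetP => x; rewrite inE => /andP [xB0 xS].
  by move: (subsetP S'U x xS); rewrite in_setU (negbTE xB0).
- by apply: leq_trans HK; apply: subset_leq_card; apply: subsetDl.
- move=> i Hi; rewrite !setDI_disj; try exact: Dj.
  by apply: (Hprof i.+1).
Qed.


Lemma expn_mono (x y m : nat) : x <= y -> x ^ m <= y ^ m.
Proof. by case: m => [//|m] H; rewrite leq_exp2r. Qed.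

Lemma cheb_pt (x y m : nat) : x ^ m * y + y ^ m * x <= x ^ m * x + y ^ m * y.
Proof.
wlog le_xy : x y / x <= y.
  move=> H; case: (leqP x y) => [/H //|/ltnW /H]; lia.
have := expn_mono m le_xy; move: (x ^ m) (y ^ m) => X Y; nia.
Qed.

Lemma sum_const_mul (I : finType) (P : {pred I}) (a : nat) :
  #|P| * a = \sum_(i in P) a.
Proof. by rewrite -sum1_card big_distrl /=; apply: eq_bigr => i _; rewrite mul1n. Qed.

Lemma cheb (I : finType) (P : {pred I}) (F : I -> nat) m :
  (\sum_(i in P) F i ^ m) * (\sum_(i in P) F i) <= #|P| * \sum_(i in P) F i ^ m.+1.
Proof.
rewrite -leq_double -!mul2n.
have E1 : (\sum_(i in P) F i ^ m) * (\sum_(i in P) F i) =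
   \sum_(i in P) \sum_(j in P) F i ^ m * F j.
  by rewrite big_distrl /=; apply: eq_bigr => i _; rewrite big_distrr.
have E1' : (\sum_(i in P) F i ^ m) * (\sum_(i in P) F i) =
   \sum_(i in P) \sum_(j in P) F j ^ m * F i.
  by rewrite E1 exchange_big.
have E2' : #|P| * \sum_(i in P) F i ^ m.+1 =
   \sum_(i in P) \sum_(j in P) F j ^ m * F j.
  by rewrite sum_const_mul; apply: eq_bigr => i _; apply: eq_bigr => j _; rewrite expnSr.
have E2 : #|P| * \sum_(i in P) F i ^ m.+1 =
   \sum_(i in P) \sum_(j in P) F i ^ m * F i.
  by rewrite E2' exchange_big.
rewrite {1}mul2n -addnn {1}E1 E1' -big_split /=.
rewrite mul2n -addnn {1}E2 E2' -big_split /=.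
apply: leq_sum => i _; rewrite -!big_split /=; apply: leq_sum => j _.
exact: cheb_pt.
Qed.

Lemma pmean (I : finType) (P : {pred I}) (F : I -> nat) m :
  (\sum_(i in P) F i) ^ m.+1 <= #|P| ^ m * \sum_(i in P) F i ^ m.+1.
Proof.
elim: m => [|m IH]; first by rewrite expn1 expn0 mul1n; apply: leq_sum => i _; rewrite expn1.
rewrite expnSr; apply: leq_trans (leq_mul IH (leqnn _)) _.
rewrite -mulnA expnSr -mulnA leq_mul2l; apply/orP; right.
exact: cheb.
Qed.

Section Fiber.
Variables (A Lt Y : finType).
Implicit Types (B : {ffun A * Lt -> Y}) (T : {ffun Lt -> Y}).

Definition upd B (a0 : A) T : {ffun A * Lt -> Y} :=
  [ffun p => if p.1 == a0 then T p.2 else B p].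
Definition rowf B (a0 : A) : {ffun Lt -> Y} := [ffun l => B (a0, l)].

Lemma rowf_upd B a0 T : rowf (upd B a0 T) a0 = T.
Proof. by apply/ffunP => l; rewrite !ffunE /= eqxx. Qed.

Lemma upd_upd B a0 T T' : upd (upd B a0 T) a0 T' = upd B a0 T'.
Proof. by apply/ffunP => p; rewrite !ffunE; case: eqP. Qed.

Lemma upd_rowf B a0 : upd B a0 (rowf B a0) = B.
Proof. by apply/ffunP => [[a l]]; rewrite !ffunE /=; case: eqP => // ->. Qed.

Lemma upd_eq B a0 T : (upd B a0 T == B) = (rowf B a0 == T).
Proof.
apply/eqP/eqP => [<-|<-]; first exact: rowf_upd.
exact: upd_rowf.
Qed.

Lemma fiber (phi : {ffun A * Lt -> Y} -> nat) a0 T0 :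
  \sum_B phi B = \sum_(B | rowf B a0 == T0) \sum_T phi (upd B a0 T).
Proof.
rewrite (exchange_big_dep predT) //=.
rewrite (partition_big (fun B => rowf B a0) predT) //=.
apply: eq_bigr => T _.
rewrite (reindex_onto (fun B => upd B a0 T) (fun B => upd B a0 T0)).
  apply: eq_bigl => B; rewrite rowf_upd eqxx /= upd_upd upd_eq ?andbT //.
by move=> B /eqP <-; rewrite upd_upd upd_rowf.
Qed.

End Fiber.

Lemma forall_nat (I : finType) (P : pred I) :
  ([forall i, P i] : nat) = \prod_i (P i : nat).
Proof.
case: forallP => [H|]; last move=> /forallP /forallPn [i Hi].
  by rewrite big1 // => i _; rewrite H.
by rewrite (bigD1 i) //= (negbTE Hi).
Qed.

Lemma blow_step (A Lt Y : finType) (a0 : A) (l0 : Lt)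
  (h : {ffun A * Lt -> Y} -> Y -> bool) (Phi0 Phi1 : {ffun A * Lt -> Y} -> bool) :
  (forall B T v, h (upd B a0 T) v = h B v) ->
  (forall B, Phi1 B = [forall l, h B (B (a0, l))]) ->
  (forall B, Phi0 B = h B (B (a0, l0))) ->
  (\sum_B (Phi0 B : nat)) ^ #|Lt| * #|{ffun A * Lt -> Y}| <=
   #|{ffun A * Lt -> Y}| ^ #|Lt| * \sum_B (Phi1 B : nat).
Proof.
move=> Hh H1 H0.
case: (pickP (@predT {ffun A * Lt -> Y})) => [B0 _|Hn]; last first.
  have -> : #|{ffun A * Lt -> Y}| = 0 by apply: eq_card0 => B; exact: Hn B.
  by rewrite muln0.
pose T0 := rowf B0 a0.
pose X := [pred B : {ffun A * Lt -> Y} | rowf B a0 == T0].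
pose d := fun B => \sum_(v : Y) (h B v : nat).
have HLt : #|Lt| = (#|Lt|.-1).+1.
  by rewrite prednK //; apply/card_gt0P; exists l0.
set m' := #|Lt|.-1 in HLt.
have Ecnt1 : \sum_B (Phi1 B : nat) = \sum_(B in X) d B ^ #|Lt|.
  rewrite (fiber _ a0 T0); apply: eq_bigr => B _.
  rewrite /d -prod_nat_const (bigA_distr_bigA (fun (l : Lt) (v : Y) => (h B v : nat))) /=.
  apply: eq_bigr => T _; rewrite H1 forall_nat; apply: eq_bigr => l _.
  by rewrite Hh ffunE /= eqxx.
have Ecnt0 : \sum_B (Phi0 B : nat) = (\sum_(B in X) d B) * #|Y| ^ m'.
  rewrite (fiber _ a0 T0) big_distrl /=; apply: eq_bigr => B _.
  have -> : \sum_T (Phi0 (upd B a0 T) : nat) =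
            \sum_(T : {ffun Lt -> Y}) \prod_l (if l == l0 then h B (T l) : nat else 1).
    apply: eq_bigr => T _; rewrite H0 Hh ffunE /= eqxx.
    by rewrite (bigD1 l0) //= eqxx big1 ?muln1 // => l /negbTE ->.
  rewrite -(bigA_distr_bigA (fun l v => if l == l0 then (h B v : nat) else 1)) /=.
  rewrite (bigD1 l0) //= eqxx; congr (_ * _).
  rewrite (eq_bigr (fun _ => #|Y|)); last first.
    by move=> l /negbTE ->; rewrite sum1_card.
  by rewrite prod_nat_const cardC1.
have EN : #|{ffun A * Lt -> Y}| = #|X| * #|Y| ^ #|Lt|.
  rewrite -sum1_card (fiber _ a0 T0) sum_const_mul; apply: eq_bigr => B _.
  by rewrite sum1_card card_ffun.
rewrite Ecnt1 Ecnt0 EN.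
have Hp := pmean X d m'; rewrite -HLt in Hp.
rewrite expnMn -expnM HLt.
move: Hp; rewrite HLt.
set S := (\sum_(B in X) d B) ^ m'.+1.
set D := \sum_(B in X) d B ^ m'.+1.
move=> Hp.
rewrite expnMn -!expnM.
have -> : (m'.+1 * m'.+1) = m' * m'.+1 + m'.+1 by rewrite mulSn addnC.
rewrite expnD expnS expnSr.
have := leq_mul (leq_mul (leq_mul Hp (leqnn (#|Y| ^ (m' * m'.+1)))) (leqnn #|X|))
   (leqnn (#|Y| * #|Y| ^ m')).
clear Hp; move: (#|Y| ^ (m' * m'.+1)) (#|Y| * #|Y| ^ m') (#|X| ^ m') #|X| S D => a b xm x S' D' H.
move: H; move: (x ^ m') => y H.
have E : y * D' * a * x * b = y * x * (a * b) * D' by lia.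
by rewrite -E !mulnA.
Qed.


Lemma L_fix (P' P Y : finType) (psi : P' -> P) (e : P' -> Y) : injective psi ->
  \sum_(B : {ffun P -> Y}) \prod_t (B (psi t) == e t : nat) = #|Y| ^ (#|P| - #|P'|).
Proof.
move=> inj.
have E1 : forall B : {ffun P -> Y}, \prod_t (B (psi t) == e t : nat) =
    \prod_p \prod_(t | psi t == p) (B p == e t : nat).
  move=> B; rewrite (partition_big psi predT) //=; apply: eq_bigr => p _.
  by apply: eq_bigr => t /eqP ->.
rewrite (eq_bigr _ (fun B _ => E1 B)).
rewrite -(bigA_distr_bigA (fun p v => \prod_(t | psi t == p) (v == e t : nat))) /=.
have E2 : forall p, \sum_v \prod_(t | psi t == p) (v == e t : nat) =
    (if p \in codom psi then 1 else #|Y|).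
  move=> p; case: codomP => [[t0 ->]|Hn].
    rewrite (eq_bigr (fun v => (v == e t0 : nat))); last first.
      by move=> v _; rewrite (big_pred1 t0) // => t /=; apply/eqP/eqP => [/inj|->].
    by rewrite -big_mkcond /= big_pred1_eq.
  rewrite (eq_bigr (fun _ => 1)); first by rewrite sum1_card.
  move=> v _; rewrite big_pred0 // => t; apply/eqP => Ht; apply: Hn; exists t; done.
rewrite (eq_bigr _ (fun p _ => E2 p)).
have -> : \prod_p (if p \in codom psi then 1 else #|Y|) =
          \prod_(p | p \notin codom psi) #|Y|.
  by rewrite [RHS]big_mkcond; apply: eq_bigr => p _; case: (p \in codom psi).
rewrite prod_nat_const; congr (_ ^ _).
rewrite -(card_codom inj) -[#|P|](cardC (mem (codom psi))) addKn.
by apply: eq_card => p; rewrite !inE.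
Qed.

Section Blow.
Variables (r L n : nat) (g : {ffun 'I_r -> 'I_n} -> bool).

Definition Gj (j : nat) (B : {ffun 'I_r * 'I_L.+1 -> 'I_n}) : bool :=
  [forall c : {ffun 'I_r -> 'I_L.+1},
    [forall a : 'I_r, (j <= a) ==> (c a == ord0)] ==> g [ffun a => B (a, c a)]].

Definition cntG j := \sum_(B : {ffun 'I_r * 'I_L.+1 -> 'I_n}) (Gj j B : nat).

Lemma GjP j (B : {ffun 'I_r * 'I_L.+1 -> 'I_n}) : reflect (forall c : {ffun 'I_r -> 'I_L.+1},
   (forall a : 'I_r, j <= a -> c a = ord0) -> g [ffun a => B (a, c a)]) (Gj j B).
Proof.
apply: (iffP forallP) => H c.
  move=> Hc; have /implyP := H c; apply; apply/forallP => a; apply/implyP => Ha.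
  by rewrite Hc.
apply/implyP => /forallP Hc; apply: H => a Ha.
by have /implyP /(_ Ha) /eqP := Hc a.
Qed.

Lemma Gj_step j (Hj : j < r) :
  cntG j ^ L.+1 * #|{ffun 'I_r * 'I_L.+1 -> 'I_n}| <=
  #|{ffun 'I_r * 'I_L.+1 -> 'I_n}| ^ L.+1 * cntG j.+1.
Proof.
pose a0 : 'I_r := Ordinal Hj.
have := @blow_step 'I_r 'I_L.+1 'I_n a0 ord0
  (fun B v => Gj j (upd B a0 [ffun _ => v])) (Gj j) (Gj j.+1).
rewrite card_ord; apply.
- by move=> B T v; rewrite upd_upd.
- move=> B; apply/GjP/forallP => [H l|H c Hc].
    apply/GjP => c Hc.
    pose c' := [ffun a => if a == a0 then l else c a].
    have -> : [ffun a => upd B a0 [ffun _ => B (a0, l)] (a, c a)] =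
              [ffun a => B (a, c' a)].
      apply/ffunP => a; rewrite !ffunE /=; case: eqP => [->|//].
      by rewrite /c' ?ffunE ?eqxx.
    apply: H => a Ha; rewrite /c' ffunE; case: eqP => [Ea|_].
      by move: Ha; rewrite Ea /= ltnn.
    by apply: Hc; apply: ltnW.
  have /GjP := H (c a0).
  pose c'' := [ffun a => if a == a0 then ord0 else c a].
  move=> /(_ c''); rewrite /c''.
  have -> : [ffun a => upd B a0 [ffun _ => B (a0, c a0)]
               (a, [ffun a1 => if a1 == a0 then ord0 else c a1] a)] =
            [ffun a => B (a, c a)].
    apply/ffunP => a; rewrite !ffunE /=; case: eqP => [->|//].
    by rewrite ?ffunE ?eqxx.
  apply => a Ha; rewrite ffunE; case: eqP => [//|Ea]; apply: Hc.
  rewrite ltn_neqAle Ha andbT; apply/eqP => Eaj; apply: Ea; apply: val_inj.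
  by rewrite /= Eaj.
- move=> B; apply/GjP/GjP => H c Hc; have := H c Hc; congr g;
    apply/ffunP => a; rewrite !ffunE /=; case: eqP => [->|//];
    rewrite ?ffunE Hc //.
Qed.

Lemma Gj0 (B : {ffun 'I_r * 'I_L.+1 -> 'I_n}) :
  Gj 0 B = g [ffun a => B (a, ord0)].
Proof.
apply/GjP/idP => [H|H c Hc].
  have := H [ffun _ => ord0] (fun a _ => ffunE _ _).
  by congr g; apply/ffunP => a; rewrite !ffunE.
by congr (g _): H; apply/ffunP => a; rewrite !ffunE Hc.
Qed.

Lemma cntG0 : cntG 0 = n ^ (r * L.+1 - r) * \sum_x (g x : nat).
Proof.
rewrite /cntG (eq_bigr _ (fun B _ => congr1 nat_of_bool (Gj0 B))).
have E : forall B : {ffun 'I_r * 'I_L.+1 -> 'I_n},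
    (g [ffun a => B (a, ord0)] : nat) =
    \sum_x (g x : nat) * \prod_a (B (a, ord0) == x a : nat).
  move=> B; rewrite (bigD1 [ffun a => B (a, ord0)]) //=.
  have P1 : \prod_a (B (a, ord0) == [ffun a => B (a, ord0)] a : nat) = 1.
    by apply: big1 => a _; rewrite ffunE eqxx.
  have P0 : \sum_(x | x != [ffun a => B (a, ord0)])
      (g x : nat) * \prod_a (B (a, ord0) == x a : nat) = 0.
    apply: big1 => x Hx; case: (pickP (fun a => B (a, ord0) != x a)) => [a Ha|Hn].
      by rewrite (bigD1 a) //= (negbTE Ha) mul0n muln0.
    case/eqP: Hx; apply/ffunP => a; rewrite ffunE.
    by move: (Hn a) => /= /negbFE /eqP.
  by rewrite P1 P0 muln1 addn0.
rewrite (eq_bigr _ (fun B _ => E B)) exchange_big /= big_distrr /=.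
apply: eq_bigr => x _; rewrite -big_distrr /= mulnC; congr (_ * _).
have inj : injective (fun a : 'I_r => (a, @ord0 L)) by move=> a b [].
rewrite (L_fix (fun a : 'I_r => x a) inj).
by rewrite card_prod !card_ord.
Qed.

End Blow.


Lemma sum_ge_term (I : finType) (F : I -> nat) i0 :
  F i0 <= \sum_i F i.
Proof. by rewrite (bigD1 i0) //= leq_addr. Qed.

Lemma sum_ge_term_in (I : finType) (P : pred I) (F : I -> nat) i0 :
  P i0 -> F i0 <= \sum_(i | P i) F i.
Proof. by move=> Pi; rewrite (bigD1 i0) //= leq_addr. Qed.

Lemma noninj_count (P Y : finType) :
  \sum_(B : {ffun P -> Y}) (~~ injectiveb B : nat) <=
  #|P| * #|P| * (#|Y| * #|Y| ^ (#|P| - 2)).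
Proof.
have H1 : forall B : {ffun P -> Y}, (~~ injectiveb B : nat) <=
    \sum_p \sum_q \sum_v ((p != q) * ((B p == v) * (B q == v)) : nat).
  move=> B; case: (boolP [exists p, exists q, (p != q) && (B p == B q)]).
    move=> /existsP [p /existsP [q /andP [Hpq /eqP E]]].
    apply: leq_trans _ (sum_ge_term _ p).
    apply: leq_trans _ (sum_ge_term _ q).
    apply: leq_trans _ (sum_ge_term _ (B p)).
    by rewrite Hpq E eqxx; case: (~~ _).
  move=> Hn; have -> : injectiveb B.
    apply/injectiveP => p q E; apply/eqP; apply: contraNT Hn => Hpq.
    by apply/existsP; exists p; apply/existsP; exists q; rewrite Hpq E eqxx.
  by [].
apply: leq_trans; first by apply: leq_sum => B _; exact: H1 B.
have ER : #|P| * #|P| * (#|Y| * #|Y| ^ (#|P| - 2)) =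
    \sum_(p : P) \sum_(q : P) \sum_(v : Y) #|Y| ^ (#|P| - 2).
  rewrite -mulnA sum_const_mul; apply: eq_bigr => p _.
  rewrite sum_const_mul; apply: eq_bigr => q _; exact: sum_const_mul.
rewrite ER exchange_big; apply: leq_sum => p _.
rewrite exchange_big; apply: leq_sum => q _.
rewrite exchange_big; apply: leq_sum => v _.
case: (eqVneq p q) => [_|Hpq].
  by rewrite big1 // => B _; rewrite eqxx.
pose psi := fun t : bool => if t then p else q.
have inj : injective psi by move=> [] [] //= E; move: Hpq; rewrite E eqxx.
have := L_fix (fun _ : bool => v) inj; rewrite card_bool => <-.
rewrite leq_eqVlt; apply/orP; left; apply/eqP.
by apply: eq_bigr => B _; rewrite big_bool /= mul1n.
Qed.

Lemma W_count (P Y : finType) (k : nat) (p0 : P) (y0 : Y) (W : {set {set Y}}) :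
  (forall w, w \in W -> #|w| = k) ->
  \sum_(B : {ffun P -> Y}) ([exists w in W, w \subset codom B] : nat) <=
  #|W| * (#|P| ^ k * #|Y| ^ (#|P| - k)).
Proof.
move=> HW.
pose e := fun (w : {set Y}) (t : 'I_k) => nth y0 (enum w) t.
have H1 : forall B : {ffun P -> Y}, ([exists w in W, w \subset codom B] : nat) <=
    \sum_(w in W) \sum_(psi : {ffun 'I_k -> P} | injectiveb psi)
       \prod_t (B (psi t) == e w t : nat).
  move=> B; case: existsP => [[w /andP [wW wB]]|//].
  have Hsz : size (enum w) = k by rewrite -cardE HW.
  have Hin : forall t : 'I_k, e w t \in w.
    by move=> t; rewrite -mem_enum /e mem_nth // Hsz.
  pose psi := [ffun t : 'I_k => odflt p0 [pick p | B p == e w t]].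
  have Hpsi : forall t, B (psi t) = e w t.
    move=> t; rewrite /psi ffunE; case: pickP => [p /eqP //|Hn].
    have /codomP [p Ep] := subsetP wB _ (Hin t).
    by move: (Hn p); rewrite Ep eqxx.
  have inj : injectiveb psi.
    apply/injectiveP => t1 t2 E.
    have : e w t1 = e w t2 by rewrite -!Hpsi E.
    move/eqP; rewrite /e nth_uniq ?Hsz ?ltn_ord ?enum_uniq //.
    by move/eqP/val_inj.
  apply: leq_trans _ (sum_ge_term_in _ wW).
  apply: leq_trans _ (sum_ge_term_in _ inj).
  by rewrite big1 // => t _; rewrite Hpsi eqxx.
apply: leq_trans; first by apply: leq_sum => B _; exact: H1 B.
rewrite exchange_big /= sum_const_mul; apply: leq_sum => w wW.
rewrite exchange_big /=.
apply: leq_trans (_ : \sum_(psi : {ffun 'I_k -> P}) #|Y| ^ (#|P| - k) <= _).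
  apply: leq_trans (_ : \sum_(psi : {ffun 'I_k -> P} | injectiveb psi)
     #|Y| ^ (#|P| - k) <= _).
    apply: eq_leq; apply: eq_bigr => psi /injectiveP inj.
    by rewrite (L_fix (e w) inj) card_ord.
  by rewrite big_mkcond /=; apply: leq_sum => psi _; case: injectiveb.
by rewrite -sum_const_mul card_ffun card_ord.
Qed.


Section G.
Variables (n k : nat) (E : {set {set 'I_n}}) (x0 : 'I_n).
Hypothesis Eunif : forall e, e \in E -> #|e| = k.

Definition fE (u : {ffun 'I_k -> 'I_n}) : bool := [set u j | j : 'I_k] \in E.

Definition gE (x : {ffun 'I_(k + k) -> 'I_n}) : bool :=
  fE [ffun j => x (lshift k j)] && ~~ fE [ffun j => x (rshift k j)].

Definition enumf (e : {set 'I_n}) : {ffun 'I_k -> 'I_n} := [ffun j : 'I_k => nth x0 (enum e) j].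

Lemma enumfK (e : {set 'I_n}) : #|e| = k -> [set enumf e j | j : 'I_k] = e.
Proof.
move=> He; have Hsz : size (enum e) = k by rewrite -cardE.
apply/setP => x; apply/imsetP/idP => [[j _ ->]|xe].
  by rewrite ffunE -mem_enum mem_nth // Hsz.
have : x \in enum e by rewrite mem_enum.
move=> /(nthP x0) [i Hi Ei]; rewrite Hsz in Hi.
by exists (Ordinal Hi) => //; rewrite ffunE.
Qed.

Lemma count_f (P : {pred {set 'I_n}}) (pf : pred {ffun 'I_k -> 'I_n}) :
  (forall e, e \in P -> #|e| = k) ->
  (forall e, e \in P -> pf (enumf e)) ->
  #|P| <= \sum_u (pf u : nat).
Proof.
move=> HP Hpf.
have inj : {in P &, injective enumf}.
  by move=> e1 e2 H1 H2 Eq; rewrite -(enumfK (HP _ H1)) -(enumfK (HP _ H2)) Eq.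
rewrite -(card_in_imset inj) -sum1_card.
rewrite big_mkcond /=; apply: leq_sum => u _.
case: ifP => // /imsetP [e He ->]; by rewrite Hpf.
Qed.

Definition concat (u u' : {ffun 'I_k -> 'I_n}) : {ffun 'I_(k + k) -> 'I_n} :=
  [ffun i => match split i with inl j => u j | inr j => u' j end].

Lemma concatL u u' j : concat u u' (lshift k j) = u j.
Proof. by rewrite ffunE (unsplitK (inl j : 'I_k + 'I_k)). Qed.
Lemma concatR u u' j : concat u u' (rshift k j) = u' j.
Proof. by rewrite ffunE (unsplitK (inr j : 'I_k + 'I_k)). Qed.

Lemma count_g :
  #|E| * ('C(n, k) - #|E|) <= \sum_x (gE x : nat).
Proof.
have H1 : #|E| <= \sum_u (fE u : nat).
  apply: count_f => // e eE; by rewrite /fE enumfK ?Eunif.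
pose NE := [set e : {set 'I_n} | (#|e| == k) && (e \notin E)].
have HNE : #|NE| = 'C(n, k) - #|E|.
  have -> : NE = [set e : {set 'I_n} | #|e| == k] :\: E.
    by apply/setP => e; rewrite !inE andbC.
  rewrite cardsDS ?card_draws ?card_ord //.
  by apply/subsetP => e eE; rewrite inE Eunif.
have H2 : #|NE| <= \sum_u (~~ fE u : nat).
  apply: count_f => e; rewrite inE => /andP [/eqP He HnE] //.
  by rewrite /fE enumfK.
rewrite -HNE; apply: leq_trans (leq_mul H1 H2) _.
rewrite big_distrl /=.
have E1 : forall u, (fE u : nat) * \sum_u' (~~ fE u' : nat) =
   \sum_u' (gE (concat u u') : nat).
  move=> u; rewrite big_distrr /=; apply: eq_bigr => u' _; rewrite /gE.
  have -> : [ffun j => concat u u' (lshift k j)] = u by apply/ffunP => j; rewrite ffunE concatL.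
  have -> : [ffun j => concat u u' (rshift k j)] = u' by apply/ffunP => j; rewrite ffunE concatR.
  by case: (fE u); case: (fE u').
rewrite (eq_bigr _ (fun u _ => E1 u)) pair_bigA /=.
have inj : injective (fun p : {ffun 'I_k -> 'I_n} * {ffun 'I_k -> 'I_n} => concat p.1 p.2).
  move=> [u1 u1'] [u2 u2'] /= Eq; congr (_, _); apply/ffunP => j.
    by rewrite -(concatL u1 u1') Eq concatL.
  by rewrite -(concatR u1 u1') Eq concatR.
rewrite -(big_imset (fun x => (gE x : nat)) (in2W inj)) /=.
by rewrite [X in _ <= X](bigID (fun x => x \in [set concat p.1 p.2 | p in predT])) /= leq_addr.
Qed.

End G.


Lemma hybrid (c : nat -> bool) k : c 0 -> ~~ c k -> exists2 t, t < k & c t && ~~ c t.+1.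
Proof.
move=> c0; elim: k => [|k IH] Hk; first by rewrite c0 in Hk.
case ck: (c k).
  by exists k => //; rewrite ck.
have [t Ht Hc] := IH (negbT ck); exists t => //; exact: ltnW.
Qed.

Lemma eq_leq' (a b c : nat) : a <= b -> c = b -> a <= c.
Proof. by move=> H ->. Qed.

Section Build.
Variables (n k s L L0 : nat) (E W : {set {set 'I_n}}) (x0 : 'I_n).
Variable (B : {ffun 'I_(k + k) * 'I_L.+1 -> 'I_n}).
Hypotheses (Hk : 2 <= k) (Hs : 2 <= s) (HL0 : L0 <= L.+1).
Hypothesis Eunif : forall e, e \in E -> #|e| = k.
Hypothesis HR : forall rows : seq {set 'I_n}, size rows = k + k ->
  (forall i, i < k + k -> L0 <= #|nth set0 rows i|) -> disj rows ->
  exists Bs : seq {set 'I_n}, [/\ size Bs = k + k,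
    (forall i, i < k + k -> nth set0 Bs i \subset nth set0 rows i /\ #|nth set0 Bs i| = s)
    & pcons (fun S => S \in E) k Bs].
Hypothesis Binj : injective B.
Hypothesis Hg : forall c : {ffun 'I_(k + k) -> 'I_L.+1}, gE E [ffun a => B (a, c a)].
Hypothesis HW : forall w, w \in W -> ~~ (w \subset codom B).

Let a0 : 'I_(k + k) := lshift k (Ordinal (leq_trans (isT : 0 < 2) Hk)).
Let rows := mkseq (fun i => [set B (insubd a0 i, l) | l : 'I_L.+1]) (k + k).

Lemma nth_rows (a : 'I_(k + k)) : nth set0 rows a = [set B (a, l) | l : 'I_L.+1].
Proof.
have Ea : insubd a0 a = a by apply: val_inj; rewrite val_insubd ltn_ord.
by rewrite /rows nth_mkseq // Ea.
Qed.

Lemma build : exists V : 'I_k -> {set 'I_n},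
  [/\ induced_pattern k s E V, ~ homogeneous_on k E (parts_union V)
    & avoids k (parts_union V) W].
Proof.
have Hrows_sz : size rows = k + k by rewrite size_mkseq.
have Hrow_card : forall i, i < k + k -> #|nth set0 rows i| = L.+1.
  move=> i Hi; have := nth_rows (Ordinal Hi); rewrite /= => ->.
  by rewrite card_imset ?card_ord // => l1 l2 /Binj [].
have Hdisj : disj rows.
  move=> i j; rewrite Hrows_sz => Hi Hj Hij.
  have := nth_rows (Ordinal Hi); have := nth_rows (Ordinal Hj); rewrite /= => -> ->.
  rewrite disjoint_subset; apply/subsetP => x /imsetP [l1 _ ->]; rewrite !inE.
  apply/imsetP => -[l2 _ /Binj [E1 _]].
  by move: Hij; rewrite E1 eqxx.
have [Bs [HBsz HBs Hpc]] := HR Hrows_sz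
  (fun i Hi => eq_leq' HL0 (Hrow_card i Hi)) Hdisj.
have Bs_sub : forall a : 'I_(k + k), nth set0 Bs a \subset [set B (a, l) | l : 'I_L.+1].
  by move=> a; rewrite -nth_rows; exact: (HBs a (ltn_ord a)).1.
have Bs_card : forall a : 'I_(k + k), #|nth set0 Bs a| = s.
  by move=> a; exact: (HBs a (ltn_ord a)).2.
have disjB : forall a b : 'I_(k + k), a != b -> [disjoint nth set0 Bs a & nth set0 Bs b].
  move=> a b Hab; apply: disjointWl (HBs a (ltn_ord a)).1 _.
  apply: disjointWr (HBs b (ltn_ord b)).1 _.
  by apply: Hdisj; rewrite ?Hrows_sz ?ltn_ord.
pose y := fun a : 'I_(k + k) => odflt x0 [pick x in nth set0 Bs a].
have y_in : forall a, y a \in nth set0 Bs a.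
  move=> a; rewrite /y; case: pickP => [x /= //|H0].
  have : #|nth set0 Bs a| = 0 by apply: eq_card0 => x; exact: H0 x.
  by rewrite Bs_card => Hs0; move: Hs; rewrite Hs0.
have y_inj : injective y.
  move=> a b Eab; apply/eqP; apply: contraT => Hab.
  by have := disjointFr (disjB a b Hab) (y_in a); rewrite Eab y_in.
pose c := [ffun a => odflt ord0 [pick l | B (a, l) == y a]].
have Hc : forall a, B (a, c a) = y a.
  move=> a; rewrite /c ffunE; case: pickP => [l /eqP //|H0].
  have /imsetP [l _ El] := subsetP (Bs_sub a) _ (y_in a).
  by move: (H0 l); rewrite El eqxx.
have Hg' := Hg c.
have Eff : [ffun a => B (a, c a)] = [ffun a => y a].
  by apply/ffunP => a; have := Hc a; rewrite !ffunE.
rewrite Eff in Hg'; move: Hg' => /andP [HT0 HTk].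
pose idx := fun (t : nat) (j : 'I_k) => if j < t then rshift k j else lshift k j.
have idx_inj : forall t, injective (idx t).
  move=> t j1 j2; rewrite /idx; case: ifP => _; case: ifP => _ Eq.
  - exact: rshift_inj Eq.
  - by move: (eq_rlshift j1 j2); rewrite Eq eqxx.
  - by move: (eq_lrshift j1 j2); rewrite Eq eqxx.
  - exact: lshift_inj Eq.
pose T := fun t => [set y (idx t j) | j : 'I_k].
have T0 : T 0 \in E.
  move: HT0; rewrite /fE; congr (_ \in E); apply: eq_imset => j.
  by rewrite !ffunE /idx ltn0.
have Tk : T k \notin E.
  move: HTk; rewrite /fE; congr (~~ (_ \in E)); apply: eq_imset => j.
  by rewrite !ffunE /idx ltn_ord.
have [t Ht /andP [Tt Tt1]] := @hybrid (fun t => T t \in E) k T0 Tk.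
have Vok : forall t0,
  [/\ induced_pattern k s E (fun j => nth set0 Bs (idx t0 j)),
      avoids k (parts_union (fun j => nth set0 Bs (idx t0 j))) W &
      T t0 \in ksubsets k (parts_union (fun j => nth set0 Bs (idx t0 j)))].
  move=> t0; pose V := fun j => nth set0 Bs (idx t0 j).
  have memU : forall x, x \in parts_union V -> exists j, x \in V j.
    by move=> x /bigcupP [j _ xj]; exists j.
  have Ucod : parts_union V \subset codom B.
    apply/subsetP => x /memU [j xj].
    by have /imsetP [l _ ->] := subsetP (Bs_sub (idx t0 j)) _ xj; apply: codom_f.
  split.
  - split.
      split => [j|j1 j2 Hj]; first exact: Bs_card.
      by apply: disjB; rewrite (inj_eq (idx_inj t0)).
    move=> S S'; rewrite !inE => /andP [SU /eqP HS] /andP [S'U /eqP HS'] Hprof.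
    have toBs : forall Z : {set 'I_n}, Z \subset parts_union V -> Z \subset \bigcup_(B0 <- Bs) B0.
      move=> Z ZU; apply/subsetP => x /(subsetP ZU) /memU [j xj]; apply/bigcup_seqP.
      by exists (idx t0 j); rewrite ?HBsz ?ltn_ord.
    apply: Hpc; rewrite ?toBs ?HS //.
    move=> i; rewrite HBsz => Hi; pose a := Ordinal Hi.
    have -> : nth set0 Bs i = nth set0 Bs a by [].
    case: (pickP (fun j => idx t0 j == a)) => [j /eqP <-|Hn].
      exact: Hprof.
    have Z0 : forall Z : {set 'I_n}, Z \subset parts_union V -> #|Z :&: nth set0 Bs a| = 0.
      move=> Z ZU; apply/eqP; rewrite cards_eq0; apply/eqP/setP => x; rewrite !inE.
      apply/andP => -[/(subsetP ZU) /memU [j xj] xa].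
      have Hja : idx t0 j != a by rewrite Hn.
      by rewrite (disjointFr (disjB _ _ Hja) xj) in xa.
    by rewrite !Z0.
  - move=> S; rewrite inE => /andP [SU _]; apply/negP => SW.
    by move: (HW SW); rewrite (subset_trans SU Ucod).
  - rewrite inE; apply/andP; split.
      apply/subsetP => x /imsetP [j _ ->]; apply/bigcupP; exists j => //.
    by rewrite card_imset ?card_ord // => j1 j2 /y_inj /idx_inj.
pose t' : 'I_k := Ordinal Ht.
have idx_same : forall j, j != t' -> idx t j = idx t.+1 j.
  move=> j Hj; rewrite /idx ltnS [j <= t]leq_eqVlt.
  have -> : (j == t :> nat) = false by apply/negbTE.
  by [].
have H1k : 1 < k by [].
have H0k : 0 < k by apply: ltnW.
pose q : 'I_k := if t == 0 then Ordinal H1k else Ordinal H0k.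
have Hq : q != t'.
  rewrite /q; case: (eqVneq t 0) => [Ht0|Ht0].
    by apply/eqP => /(congr1 val) /=; rewrite Ht0.
  by apply/eqP => /(congr1 val) /= Et; move: Ht0; rewrite -Et eqxx.
have [z zin] : exists z, z \in nth set0 Bs (idx t q) :\ y (idx t q).
  apply/set0Pn; rewrite -card_gt0.
  have := cardsD1 (y (idx t q)) (nth set0 Bs (idx t q)); rewrite y_in Bs_card add1n.
  by move=> Es; move: Hs; rewrite Es ltnS.
move: zin; rewrite in_setD1 => /andP [zny zq].
pose Sp := z |: (T t :\ y (idx t t')).
have znT : z \notin T t.
  apply/imsetP => -[j _ Ez].
  case: (eqVneq j q) => [Ejq|Hjq].
    by move: zny; rewrite Ez Ejq eqxx.
  have Hd : idx t q != idx t j by rewrite (inj_eq (idx_inj t)) eq_sym.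
  by move: (disjointFr (disjB _ _ Hd) zq); rewrite Ez y_in.
have Sp_card : #|Sp| = k.
  have HTt : #|T t| = k by rewrite card_imset ?card_ord // => j1 j2 /y_inj /idx_inj.
  rewrite cardsU1 in_setD1 (negbTE znT) andbF /=.
  have := cardsD1 (y (idx t t')) (T t).
  rewrite HTt (_ : y (idx t t') \in T t) ?add1n; last by apply/imsetP; exists t'.
  by move=> ->.
have Sp_sub : forall t0, (t0 == t) || (t0 == t.+1) ->
    Sp \subset parts_union (fun j => nth set0 Bs (idx t0 j)).
  move=> t0 Ht0; apply/subsetP => x; rewrite in_setU1 => /orP [/eqP ->|].
    apply/bigcupP; exists q => //=.
    case/orP: Ht0 => /eqP -> //; by rewrite -idx_same.
  rewrite in_setD1 => /andP [xny /imsetP [j _ Ex]].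
  have Hj : j != t' by apply: contraNneq xny => Ejt; rewrite Ex Ejt.
  apply/bigcupP; exists j => //=; rewrite Ex.
  case/orP: Ht0 => /eqP -> //; by rewrite -idx_same.
have Spk : forall t0, (t0 == t) || (t0 == t.+1) ->
    Sp \in ksubsets k (parts_union (fun j => nth set0 Bs (idx t0 j))).
  by move=> t0 Ht0; rewrite inE Sp_sub // Sp_card eqxx.
have Ht1' : (t.+1 == t) || (t.+1 == t.+1) by rewrite eqxx orbT.
have Ht0' : (t == t) || (t == t.+1) by rewrite eqxx.
case SpE: (Sp \in E).
  have [HP HA HT] := Vok t.+1.
  exists (fun j => nth set0 Bs (idx t.+1 j)); split => // -[Hne|Hall].
    by move: (Hne Sp (Spk t.+1 Ht1')); rewrite SpE.
  by move: (Hall _ HT); rewrite (negbTE Tt1).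
have [HP HA HT] := Vok t.
exists (fun j => nth set0 Bs (idx t j)); split => // -[Hne|Hall].
  by move: (Hne _ HT); rewrite Tt.
by move: (Hall Sp (Spk t Ht0')); rewrite SpE.
Qed.

End Build.

Section RealPart8.
Import Order.TTheory GRing.Theory Num.Theory.
Local Open Scope ring_scope.

Lemma chain (R : realFieldType) (N m r : nat) (cnt : nat -> nat) : (0 < N)%N ->
  (forall j, (j < r)%N -> (cnt j ^ m * N <= N ^ m * cnt j.+1)%N) ->
  forall j, (j <= r)%N ->
  ((cnt 0)%:R / N%:R) ^+ (m ^ j) <= (cnt j)%:R / N%:R :> R.
Proof.
move=> N0 Hstep; elim=> [|j IH] Hj; first by rewrite expn0 expr1.
have Hj' : (j < r)%N by [].
apply: le_trans (_ : ((cnt j)%:R / N%:R) ^+ m <= _).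
  rewrite expnSr exprM lerXn2r ?nnegrE ?divr_ge0 ?exprn_ge0 ?ler0n //.
    by rewrite divr_ge0 ?ler0n.
  exact: IH (ltnW Hj).
have H := Hstep j Hj'.
have HR : (cnt j)%:R ^+ m * N%:R <= N%:R ^+ m * (cnt j.+1)%:R :> R.
  by rewrite -!natrX -!natrM ler_nat.
rewrite expr_div_n ler_pdivrMr ?exprn_gt0 ?ltr0n //.
rewrite mulrAC ler_pdivlMr ?ltr0n //.
by rewrite [X in _ <= X]mulrC.
Qed.

End RealPart8.
Section RealPart9.
Import Order.TTheory GRing.Theory Num.Theory.
Local Open Scope ring_scope.

Lemma main_lemma (R : archiRealFieldType) (k s : nat) (delta : R) :
  (2 <= k)%N -> (2 <= s)%N -> 0 < delta ->
  exists gamma : R, 0 < gamma /\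
  exists n0 : nat, forall n : nat, (n0 <= n)%N ->
  forall E W : {set {set 'I_n}},
    k_uniform k E ->
    delta * n%:R ^+ k <= Num.min (#|E|%:R) ('C(n, k)%:R - #|E|%:R) ->
    k_uniform k W ->
    #|W|%:R <= gamma * n%:R ^+ k ->
    exists V : 'I_k -> {set 'I_n},
      [/\ induced_pattern k s E V,
          ~ homogeneous_on k E (parts_union V)
        & avoids k (parts_union V) W].
Proof.
move=> Hk Hs Hd.
have [L0 HL0] := prod_ramsey (k + k) k 2 s.
pose r := (k + k)%N.
pose M := (r * L0.+1)%N.
pose e := (L0.+1 ^ r)%N.
pose eps : R := (delta ^+ 2) ^+ e.
have eps_gt0 : 0 < eps by rewrite exprn_gt0 // exprn_gt0.
have HrM : (r <= M)%N by rewrite /M -{1}(muln1 r) leq_mul2l ltn0Sn orbT.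
have Hr2 : (2 <= r)%N by apply: leq_trans Hk _; rewrite leq_addr.
have HkM : (k <= M)%N by apply: leq_trans HrM; rewrite leq_addr.
have HM2 : (2 <= M)%N by apply: leq_trans HrM.
pose gamma : R := eps / (2 * M%:R ^+ k).
have gamma_gt0 : 0 < gamma.
  by rewrite divr_gt0 // mulr_gt0 // exprn_gt0 // ltr0n; apply: leq_trans HM2.
exists gamma; split => //.
have Egm : gamma * M%:R ^+ k = eps / 2.
  rewrite /gamma invfM mulrA -mulrA mulVf ?mulr1 //.
  by rewrite expf_neq0 // pnatr_eq0 -lt0n; apply: leq_trans HM2.
pose b : R := 2 * M%:R ^+ 2 / eps.
have b_ge0 : 0 <= b by rewrite divr_ge0 ?mulr_ge0 ?exprn_ge0 ?ler0n // ltW.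
exists (Num.Def.archi_bound b).+1 => n Hn E W HE Hmin HWu HWc.
have Hnb : b < n%:R.
  apply: lt_le_trans (archi_boundP b_ge0) _; rewrite ler_nat; exact: ltnW.
have n_gt0 : (0 < n)%N by move: Hn; apply: leq_trans.
pose x0 : 'I_n := Ordinal n_gt0.
have nR_gt0 : 0 < n%:R :> R by rewrite ltr0n.
pose g := @gE n k E.
pose N := #|{ffun 'I_r * 'I_L0.+1 -> 'I_n}|.
have EN : N = (n ^ M)%N by rewrite /N card_ffun card_prod !card_ord.
have HN0 : (0 < N)%N by rewrite EN expn_gt0 n_gt0.
have NR : N%:R = n%:R ^+ M :> R by rewrite EN natrX.
have Hchain := @chain R N L0.+1 r (fun j => cntG L0 g j) HN0
  (fun j Hj => Gj_step L0 g Hj) r (leqnn r).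
rewrite /= in Hchain.
have [HE1 HE2] : delta * n%:R ^+ k <= #|E|%:R /\
                 delta * n%:R ^+ k <= 'C(n, k)%:R - #|E|%:R.
  by move: Hmin; rewrite le_min => /andP.
have HEC : (#|E| <= 'C(n, k))%N.
  have -> : 'C(n, k) = #|[set A : {set 'I_n} | #|A| == k]| by rewrite card_draws card_ord.
  apply: subset_leq_card.
  by apply/subsetP => e' eE; rewrite inE HE.
have Hg : delta ^+ 2 * n%:R ^+ r <= (\sum_x (g x : nat))%:R.
  apply: le_trans (_ : (#|E| * ('C(n, k) - #|E|))%:R <= _); last first.
    by rewrite ler_nat; apply: count_g.
  rewrite natrM natrB // /r exprD expr2 mulrACA.
  by apply: ler_pM => //; rewrite mulr_ge0 ?exprn_ge0 ?ltW.
have Hd0 : delta ^+ 2 <= (cntG L0 g 0)%:R / N%:R.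
  rewrite cntG0 NR natrM natrX -/M.
  have -> : n%:R ^+ M = n%:R ^+ (M - r) * n%:R ^+ r :> R by rewrite -exprD subnK.
  rewrite -mulf_div divff ?mul1r; last by rewrite expf_neq0 // gt_eqF.
  by rewrite ler_pdivlMr ?exprn_gt0.
have Hcr : eps * N%:R <= (cntG L0 g r)%:R.
  rewrite -ler_pdivlMr ?ltr0n //; apply: le_trans Hchain.
  have d2 : 0 <= delta ^+ 2 by rewrite exprn_ge0 // ltW.
  by apply: lerXn2r; rewrite ?nnegrE // (le_trans d2 Hd0).
have [B HB] : exists B : {ffun 'I_r * 'I_L0.+1 -> 'I_n},
    [&& Gj g r B, injectiveb B & ~~ [exists w in W, w \subset codom B]].
  case: (pickP (fun B : {ffun 'I_r * 'I_L0.+1 -> 'I_n} =>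
     [&& Gj g r B, injectiveb B & ~~ [exists w in W, w \subset codom B]])) => [B HB|Hno].
    by exists B.
  exfalso.
  have Hle : (cntG L0 g r <= \sum_(B : {ffun 'I_r * 'I_L0.+1 -> 'I_n}) (~~ injectiveb B : nat)
      + \sum_(B : {ffun 'I_r * 'I_L0.+1 -> 'I_n}) ([exists w in W, w \subset codom B] : nat))%N.
    rewrite /cntG -big_split /=; apply: leq_sum => B _; move: (Hno B) => /=.
    by case: (Gj g r B); case: (injectiveb B); case: [exists w in W, w \subset codom B].
  pose p0 : ('I_r * 'I_L0.+1)%type := (Ordinal (leq_trans (isT : (0 < 2)%N) Hr2), ord0).
  have H1 := noninj_count ('I_r * 'I_L0.+1)%type 'I_n.
  have H2 := W_count p0 x0 HWu.
  rewrite card_prod !card_ord -/r -/M in H1 H2.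
  have Hsum := leq_trans Hle (leq_add H1 H2).
  clearbody M.
  have HsumR : eps * n%:R ^+ M <=
      M%:R ^+ 2 * n%:R ^+ (M.-1) + #|W|%:R * (M%:R ^+ k * n%:R ^+ (M - k)).
    rewrite -NR; apply: le_trans Hcr _.
    move: Hsum; rewrite -(ler_nat R) !natrD !natrM !natrX => H.
    apply: le_trans H _; rewrite lerD2r -expr2 -exprS.
    by have -> : (M - 2).+1 = M.-1 by rewrite -subn1 -subSn ?subSS //.
  have HW2 : #|W|%:R * (M%:R ^+ k * n%:R ^+ (M - k)) <= eps / 2 * n%:R ^+ M.
    apply: le_trans (_ : gamma * n%:R ^+ k * (M%:R ^+ k * n%:R ^+ (M - k)) <= _).
      by apply: ler_wpM2r => //; rewrite mulr_ge0 ?exprn_ge0 ?ler0n.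
    by rewrite mulrACA Egm -exprD subnKC.
  have H3 : eps / 2 * n%:R ^+ M <= M%:R ^+ 2 * n%:R ^+ M.-1 by nra.
  have HM0 : (0 < M)%N by apply: leq_trans HM2.
  have EM : n%:R ^+ M = n%:R * n%:R ^+ M.-1 :> R by rewrite -exprS prednK.
  rewrite EM in H3.
  have Xgt0 : 0 < n%:R ^+ M.-1 :> R by rewrite exprn_gt0.
  have H4 : eps / 2 * n%:R <= M%:R ^+ 2.
    move: H3; move: (n%:R ^+ M.-1) Xgt0 => X Xgt0 H3; nra.
  have : n%:R <= b.
    by rewrite /b ler_pdivlMr //; nra.
  by rewrite leNgt Hnb.
move: HB => /and3P [HG Binj HnW].
have HGc : forall c : {ffun 'I_(k + k) -> 'I_L0.+1}, gE E [ffun a => B (a, c a)].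
  move=> c; move/GjP: HG; apply => a Ha.
  by move: (ltn_ord a); rewrite ltnNge Ha.
have HW' : forall w, w \in W -> ~~ (w \subset codom B).
  move=> w wW; apply/negP => Hsub; move/negP: HnW; apply.
  by apply/existsP; exists w; rewrite wW Hsub.
have HR : forall rows : seq {set 'I_n}, size rows = (k + k)%N ->
  (forall i, (i < k + k)%N -> (L0 <= #|nth set0 rows i|)%N) -> disj rows ->
  exists Bs : seq {set 'I_n}, [/\ size Bs = (k + k)%N,
    (forall i, (i < k + k)%N -> nth set0 Bs i \subset nth set0 rows i /\ #|nth set0 Bs i| = s)
    & pcons (fun S => S \in E) k Bs].
  move=> rows Hsz Hrows Hdisj.
  by apply: (HL0 'I_n bool (fun S => S \in E) rows Hsz _ Hrows Hdisj); rewrite card_bool.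
exact: (build x0 Hk Hs (leqnSn L0) HR (injectiveP _ Binj) HGc HW').
Qed.

End RealPart9.

Import Order.TTheory GRing.Theory Num.Theory.
Local Open Scope ring_scope.

Theorem proposition3p2 (R : realType) (k s : nat) (delta : R) :
  (2 <= k)%N -> (2 <= s)%N -> 0 < delta ->
  exists gamma : R, 0 < gamma /\
  exists n0 : nat, forall n : nat, (n0 <= n)%N ->
  forall E W : {set {set 'I_n}},
    k_uniform k E ->
    delta * n%:R ^+ k <= Num.min (#|E|%:R) ('C(n, k)%:R - #|E|%:R) ->
    k_uniform k W ->
    #|W|%:R <= gamma * n%:R ^+ k ->
    exists V : 'I_k -> {set 'I_n},
      [/\ induced_pattern k s E V,
          ~ homogeneous_on k E (parts_union V)
        & avoids k (parts_union V) W].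
Proof. exact: main_lemma. Qed.
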